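(* Let $\|\cdot\|$ be a norm on $\mathbb{B}(\mathcal{H})$ which is an $L$-norm or an $M$-norm. Then $\|EAE\|\le\|A\|$ for every (orthogonal) projection $E\in\mathbb{B}(\mathcal{H})$ and every $A\in\mathbb{B}(\mathcal{H})$.
   Context: $\mathbb{B}(\mathcal{H})$ is the algebra of bounded operators on a Hilbert space $\mathcal{H}$ with identity $I$. A norm $\|\cdot\|$ on $\mathbb{B}(\mathcal{H})$ is an $M$-norm if $\left\|\sum_{i=1}^k C_i^*X_iC_i\right\|\le \max_{1\le i\le k}\|X_i\|$ for all $k$, all $X_i\in\mathbb{B}(\mathcal{H})$ and all $C_i\in\mathbb{B}(\mathcal{H})$ with $\sum_{i=1}^k C_i^*C_i=I$. It is an $L$-norm if $\sum_{i=1}^k\|C_iXC_i^*\|\le\|X\|$ for all $k$, all $X\in\mathbb{B}(\mathcal{H})$ and all $C_i$ with $\sum_{i=1}^k C_i^*C_i=I$. *)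

(* Defs.v *)
From HB Require Import structures.
From mathcomp Require Import all_boot all_order all_algebra.
From mathcomp Require Import complex.
From mathcomp Require Import reals.
Set Implicit Arguments. Unset Strict Implicit. Unset Printing Implicit Defensive.
Import Order.TTheory GRing.Theory Num.Theory.
Local Open Scope ring_scope.
Local Open Scope complex_scope.

Section Hilbert.
Variable R : realType.
Variable V : lmodType R[i].
Variable ip : V -> V -> R[i].

Definition is_inner_product : Prop :=
  [/\ (forall (a : R[i]) (x y z : V), ip (a *: x + y) z = a * ip x z + ip y z),
      (forall x y : V, ip x y = (ip y x)^*),
      (forall x : V, 0 <= ip x x) &
      (forall x : V, ip x x = 0 -> x = 0)].

Definition hnorm (x : V) : R := Num.sqrt (complex.Re (ip x x)).

Definition hcomplete : Prop :=
  forall u : nat -> V,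
    (forall e : R, 0 < e -> exists N : nat, forall m n : nat,
        (N <= m)%N -> (N <= n)%N -> hnorm (u m - u n) < e) ->
    exists l : V, forall e : R, 0 < e -> exists N : nat, forall n : nat,
        (N <= n)%N -> hnorm (u n - l) < e.

Definition is_hilbert : Prop := is_inner_product /\ hcomplete.

Definition bounded_op (T : V -> V) : Prop :=
  (forall (a : R[i]) (x y : V), T (a *: x + y) = a *: T x + T y) /\
  exists M : R, forall x : V, hnorm (T x) <= M * hnorm x.

Definition is_adjoint (T S : V -> V) : Prop :=
  forall x y : V, ip (T x) y = ip x (S y).

Definition is_projection (E : V -> V) : Prop :=
  [/\ bounded_op E, is_adjoint E E & forall x, E (E x) = E x].

Definition is_op_norm (nrm : (V -> V) -> R) : Prop :=
  [/\ (forall T, bounded_op T -> nrm T = 0 -> forall x, T x = 0),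
      (forall (a : R[i]) T, bounded_op T ->
          nrm (fun x => a *: T x) = Normc.normc a * nrm T) &
      (forall T S, bounded_op T -> bounded_op S ->
          nrm (fun x => T x + S x) <= nrm T + nrm S)].

Definition is_M_norm (nrm : (V -> V) -> R) : Prop :=
  forall (k : nat) (X C Cs : 'I_k -> V -> V),
    (forall i, bounded_op (X i)) -> (forall i, bounded_op (C i)) ->
    (forall i, bounded_op (Cs i)) -> (forall i, is_adjoint (C i) (Cs i)) ->
    (forall x, \sum_(i < k) Cs i (C i x) = x) ->
    nrm (fun x => \sum_(i < k) Cs i (X i (C i x)))
      <= \big[Num.max/0]_(i < k) nrm (X i).

Definition is_L_norm (nrm : (V -> V) -> R) : Prop :=
  forall (k : nat) (X : V -> V) (C Cs : 'I_k -> V -> V),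
    bounded_op X -> (forall i, bounded_op (C i)) ->
    (forall i, bounded_op (Cs i)) -> (forall i, is_adjoint (C i) (Cs i)) ->
    (forall x, \sum_(i < k) Cs i (C i x) = x) ->
    \sum_(i < k) nrm (fun x => C i (X (Cs i x))) <= nrm X.

End Hilbert.

(* Main.v *)
Require Import Defs.
From HB Require Import structures.
From mathcomp Require Import all_boot all_order all_algebra.
From mathcomp Require Import complex.
From mathcomp Require Import reals.
From Stdlib Require Import FunctionalExtensionality.
Set Implicit Arguments. Unset Strict Implicit.
Import Order.TTheory GRing.Theory Num.Theory.
Local Open Scope ring_scope.
Local Open Scope complex_scope.

Section Aux.
Variable R : realType.
Variable V : lmodType R[i].
Variable ip : V -> V -> R[i].
Hypothesis hip : is_inner_product ip.

Lemma ReD (x y : R[i]) : complex.Re (x + y) = complex.Re x + complex.Re y.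
Proof. by case: x => a b; case: y => c d. Qed.

Lemma ip0l z : ip 0 z = 0.
Proof.
case: hip => lin _ _ _.
have h := lin 1 0 0 z; rewrite scaler0 addr0 mul1r in h.
by apply: (addrI (ip 0 z)); rewrite addr0 -h.
Qed.

Lemma ipDl x y z : ip (x + y) z = ip x z + ip y z.
Proof. case: hip => lin _ _ _. by have := lin 1 x y z; rewrite scale1r mul1r. Qed.

Lemma ipNl x z : ip (- x) z = - ip x z.
Proof.
case: hip => lin _ _ _.
by have := lin (-1) x 0 z; rewrite addr0 scaleN1r ip0l addr0 mulN1r.
Qed.

Lemma ipBl x y z : ip (x - y) z = ip x z - ip y z.
Proof. by rewrite ipDl ipNl. Qed.

Lemma ipBr x y z : ip x (y - z) = ip x y - ip x z.
Proof.
case: hip => _ sym _ _.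
by rewrite (sym x (y - z)) ipBl rmorphB /= -!sym.
Qed.

Lemma ipDr x y z : ip x (y + z) = ip x y + ip x z.
Proof.
case: hip => _ sym _ _.
by rewrite (sym x (y + z)) ipDl rmorphD /= -!sym.
Qed.

Lemma ip0r x : ip x 0 = 0.
Proof. case: hip => _ sym _ _. by rewrite sym ip0l conjc0. Qed.

Lemma ipNr x z : ip x (- z) = - ip x z.
Proof. by have := ipBr x 0 z; rewrite add0r ip0r add0r. Qed.

Lemma hnorm_ge0 x : 0 <= hnorm ip x.
Proof. exact: sqrtr_ge0. Qed.

Lemma hnorm0 : hnorm ip 0 = 0.
Proof. by rewrite /hnorm ip0l /= sqrtr0. Qed.

Lemma lin0 T : bounded_op ip T -> T 0 = 0.
Proof.
case=> lin _; have h := lin 1 0 0; rewrite scaler0 addr0 scale1r in h.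
by apply: (addrI (T 0)); rewrite addr0 -h.
Qed.

Lemma linB T x y : bounded_op ip T -> T (x - y) = T x - T y.
Proof.
move=> hT; have [lin _] := hT.
by have := lin (-1) y x; rewrite !scaleN1r addrC => ->; rewrite addrC.
Qed.

Lemma bounded_nonneg T : bounded_op ip T ->
  exists M, 0 <= M /\ forall x, hnorm ip (T x) <= M * hnorm ip x.
Proof.
case=> _ [M hM]; exists (Num.max M 0); split; first by rewrite le_max lexx orbT.
move=> x; apply: (le_trans (hM x)); apply: ler_wpM2r; first exact: hnorm_ge0.
by rewrite le_max lexx.
Qed.

Lemma bounded_comp T S : bounded_op ip T -> bounded_op ip S ->
  bounded_op ip (fun x => T (S x)).
Proof.
move=> hT hS; split.
  by move=> a x y; have [l1 _] := hT; have [l2 _] := hS; rewrite l2 l1.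
have [M1 [M10 h1]] := bounded_nonneg hT; have [M2 [M20 h2]] := bounded_nonneg hS.
exists (M1 * M2) => x; apply: (le_trans (h1 _)); rewrite -mulrA.
by apply: ler_wpM2l.
Qed.

Lemma bounded_neg T : bounded_op ip T -> bounded_op ip (fun x => (-1) *: T x).
Proof.
move=> hT; have [lin [M hM]] := hT; split.
  by move=> a x y; rewrite lin scalerDr !scalerA mulrC.
exists M => x; rewrite scaleN1r.
suff -> : hnorm ip (- T x) = hnorm ip (T x) by [].
by rewrite /hnorm ipNl ipNr opprK.
Qed.

Lemma bounded_zero : bounded_op ip (fun _ => 0).
Proof.
split; first by move=> a x y; rewrite scaler0 addr0.
by exists 0 => x; rewrite hnorm0 mul0r.
Qed.

Lemma nrm_nonneg nrm T : is_op_norm ip nrm -> bounded_op ip T -> 0 <= nrm T.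
Proof.
case=> _ hom tri hT.
have hN := bounded_neg hT.
have t := tri _ _ hT hN.
have e : (fun x => T x + (-1) *: T x) = (fun x => 0 *: T x).
  by apply: functional_extensionality => x; rewrite scaleN1r subrr scale0r.
rewrite e hom // Normc.normc0 mul0r hom // normcN Normc.normc1 mul1r in t.
by rewrite -(ler_pM2l (ltr0n _ 2)) mulr0 mulr2n mulrDl mul1r.
Qed.

Lemma nrm_zero nrm T : is_op_norm ip nrm -> bounded_op ip T -> nrm (fun _ => 0) = 0.
Proof.
case=> _ hom _ hT.
have e : (fun _ : V => (0 : V)) = (fun x => 0 *: T x).
  by apply: functional_extensionality => x; rewrite scale0r.
by rewrite e hom // Normc.normc0 mul0r.
Qed.

Section Proj.
Variable E : V -> V.
Hypothesis hE : is_projection ip E.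
Let P := fun x => x - E x.

Lemma P_bounded : bounded_op ip P.
Proof.
have [hEb adj idem] := hE; have [lin _] := hEb; split.
  by move=> a x y; rewrite /P lin scalerBr opprD addrACA.
exists 1 => x; rewrite mul1r /hnorm; rewrite ler_sqrt; last first.
  case: hip => _ _ pos _; have := pos x; rewrite lecE => /andP[_]; done.
have ex : x = E x + P x by rewrite /P addrC subrK.
have ort : ip (E x) (P x) = 0 by rewrite adj /P linB // idem subrr ip0r.
have ort2 : ip (P x) (E x) = 0.
  by case: hip => _ sym _ _; rewrite sym ort conjc0.
have hxx : ip x x = ip (E x) (E x) + ip (P x) (P x).
  move: ort ort2 ex; set u := E x; set w := P x => o1 o2 ex; clearbody u w.
  by rewrite {1 2}ex ipDl !ipDr o1 o2 addr0 add0r.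
rewrite hxx ReD lerDr.
by case: hip => _ _ pos _; have := pos (E x); rewrite lecE => /andP[_].
Qed.

Lemma P_adj : is_adjoint ip P P.
Proof.
have [hEb adj idem] := hE.
by move=> x y; rewrite /P ipBl ipBr adj.
Qed.

End Proj.
End Aux.

Theorem lemma2p8 (R : realType) (V : lmodType R[i]) (ip : V -> V -> R[i])
  (hH : is_hilbert ip) (nrm : (V -> V) -> R) (hn : is_op_norm ip nrm)
  (hLM : is_L_norm ip nrm \/ is_M_norm ip nrm)
  (E A : V -> V) (hE : is_projection ip E) (hA : bounded_op ip A) :
  nrm (fun x => E (A (E x))) <= nrm A.
Proof.
have [hip _] := hH.
have [hEb adj idem] := hE.
pose P := fun x => x - E x.
have hPb : bounded_op ip P := P_bounded hip hE.
have hPa : is_adjoint ip P P := P_adj hip hE.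
pose C := fun i : 'I_2 => if val i == 0%N then E else P.
have Cb : forall i, bounded_op ip (C i) by move=> i; rewrite /C; case: ifP.
have Ca : forall i, is_adjoint ip (C i) (C i) by move=> i; rewrite /C; case: ifP.
have Cs : forall x, \sum_(i < 2) C i (C i x) = x.
  move=> x; have E0 : E (x - E x) = 0.
    by have := linB (ip:=ip) x (E x) hEb; rewrite idem subrr.
  rewrite !big_ord_recl big_ord0 /C /= addr0 idem /P E0 subr0.
  by rewrite addrC subrK.
case: hLM => [hL | hM].
  have := hL 2 A C C hA Cb Cb Ca Cs.
  rewrite !big_ord_recl big_ord0 /C /= addr0 => h.
  apply: le_trans h; rewrite lerDl.
  apply: (nrm_nonneg hip hn); apply: bounded_comp => //; exact: bounded_comp.
pose X := fun i : 'I_2 => if val i == 0%N then A else (fun _ : V => 0).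
have Xb : forall i, bounded_op ip (X i).
  by move=> i; rewrite /X; case: ifP => _ //; exact: bounded_zero.
have := hM 2 X C C Xb Cb Cb Ca Cs.
have -> : (fun x => \sum_(i < 2) C i (X i (C i x))) = (fun x => E (A (E x))).
  apply: functional_extensionality => x.
  by rewrite !big_ord_recl big_ord0 /C /X /= /P (lin0 hEb) subr0 !addr0.
move=> h; apply: le_trans h _.
rewrite !big_ord_recl big_ord0 /X /= (nrm_zero hn hA).
by rewrite !ge_max lexx (nrm_nonneg hip hn hA).
Qed.
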